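(* Suppose $(A,W)$ is a Pratt comonoid such that $W$ has cardinality less than the continuum. Say that an element $a\in A$ dominates an equivalence class $E$ of strongly indecomposable elements of $W$ if every member of $W$ containing $a$ contains some member of $E$. Then every $a\in A$ dominates at least one equivalence class of strongly indecomposable elements of $W$. Moreover, if $(A,W)$ is $T_1$ and $a$ dominates an equivalence class $E$, then either $\bigcap_{w\in E}w=\emptyset$ or $\bigcap_{w\in E}w=\{a\}$; and in the latter case, $E$ is the set of all strongly indecomposable elements of $W$ containing $a$, $E$ is the only equivalence class dominated by $a$, and $a$ is the only element of $A$ dominating $E$. Consequently, if $(A,W)$ is $T_1$ and $A$ is infinite, there exists at least one equivalence class $E$ of strongly indecomposable elements of $W$ with $\bigcap_{w\in E}w=\emptyset$.
   Context: A Pratt comonoid is a pair $(A,W)$ where $A$ is a set and $W$ is a set of subsets of $A$ such that (i) $\emptyset\in W$ and $A\in W$; (ii) whenever $C\subseteq A\times A$ is such that for every $a\in A$ both the $a$-th row $\{b\mid (a,b)\in C\}$ and the $a$-th column $\{b\mid (b,a)\in C\}$ belong to $W$, the diagonal $\{b\mid (b,b)\in C\}$ also belongs to $W$. $(A,W)$ is $T_1$ if for all distinct $a,b\in A$ some member of $W$ contains $a$ but not $b$. $W$ is regarded as a meet-semilattice under intersection with least element $\emptyset$. Two elements are disjoint if their intersection is $\emptyset$. A nonempty $x\in W$ is strongly indecomposable if there do not exist two disjoint nonempty elements of $W$ properly contained in $x$. Two strongly indecomposable elements are equivalent if they are not disjoint (this is an equivalence relation on strongly indecomposable elements). *)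

(* Defs.v *)
From mathcomp Require Import all_boot.
From mathcomp Require Export boolp classical_sets functions cardinality.
Set Implicit Arguments. Unset Strict Implicit. Unset Printing Implicit Defensive.
Local Open Scope classical_set_scope.

Definition pratt_comonoid (A : Type) (W : set (set A)) : Prop :=
  W set0 /\ W setT /\
  forall C : set (A * A),
    (forall a : A, W [set b | C (a, b)] /\ W [set b | C (b, a)]) ->
    W [set b | C (b, b)].

Definition pratt_T1 (A : Type) (W : set (set A)) : Prop :=
  forall a b : A, a <> b -> exists w, W w /\ w a /\ ~ w b.

Definition strongly_indecomposable (A : Type) (W : set (set A)) (x : set A) :=
  W x /\ x !=set0 /\
  ~ (exists y z, W y /\ W z /\ y !=set0 /\ z !=set0 /\ y `&` z = set0 /\
                 y `<` x /\ z `<` x).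

(* E is an equivalence class of strongly indecomposable elements
   (equivalence = not disjoint). *)
Definition si_class (A : Type) (W : set (set A)) (E : set (set A)) :=
  exists x, strongly_indecomposable W x /\
    E = [set y | strongly_indecomposable W y /\ y `&` x !=set0].

Definition dominates (A : Type) (W : set (set A)) (a : A) (E : set (set A)) :=
  forall w, W w -> w a -> exists e, E e /\ e `<=` w.

Definition bigcap_fam (A : Type) (E : set (set A)) : set A :=
  [set b | forall w, E w -> w b].

Definition card_lt_continuum (A : Type) (W : set (set A)) : Prop :=
  ~ ([set: nat -> bool] #<= W)%card.

(* Main.v *)
Require Import Defs.
From mathcomp Require Import all_boot boolp classical_sets cardinality.
From mathcomp Require Import functions.
Set Implicit Arguments. Unset Strict Implicit.
Local Open Scope classical_set_scope.

Section Helpers.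
Variables (A : Type) (W : set (set A)).
Hypothesis HP : pratt_comonoid W.

Lemma W_eq x y : W x -> (forall b, y b <-> x b) -> W y.
Proof.
by move=> Wx H; have -> : y = x by apply/seteqP; split=> b /H.
Qed.

Lemma W_meet x y : W x -> W y -> W (x `&` y).
Proof.
move=> Wx Wy; case: HP => W0 [WT HC].
apply: (HC (fun p : A * A => x p.1 /\ y p.2)) => a; split.
  have [xa|nxa] := pselect (x a).
    by apply: (W_eq Wy) => b /=; split=> [[]|].
  by apply: (W_eq W0) => b /=; split=> [[]|].
have [ya|nya] := pselect (y a).
  by apply: (W_eq Wx) => b /=; split=> [[]|].
by apply: (W_eq W0) => b /=; split=> [[]|].
Qed.

Hypothesis HC : card_lt_continuum W.

Lemma FD (x : nat -> set A) : (forall n, W (x n)) -> (forall n, x n !=set0) ->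
  (forall n m b, x n b -> x m b -> n = m) -> False.
Proof.
move=> Wx x0 xd; apply: HC; apply/pcard_leP/injfunPex.
exists (fun S : nat -> bool => [set b | exists n, S n /\ x n b]).
- move=> S _; case: HP => W0 [WT HC'].
  pose C := [set p : A * A | exists n, S n /\ x n p.1 /\ x n p.2].
  have -> : [set b | exists n, S n /\ x n b] = [set b | C (b, b)].
    by apply/seteqP; split=> [b [n [Sn xb]]|b [n [Sn [xb _]]]]; exists n.
  apply: HC' => a; split.
    have [[n [Sn xna]]|nn] := pselect (exists n, S n /\ x n a).
      have -> : [set b | C (a, b)] = x n.
        apply/seteqP; split=> [b [m [Sm [xma xmb]]]|b xnb].
          by rewrite (xd _ _ _ xna xma).
        by exists n.
      exact: Wx.
    have -> : [set b | C (a, b)] = set0.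
      by apply/seteqP; split=> [b [m [Sm [xma xmb]]]|b []]; apply: nn; exists m.
    by [].
  have [[n [Sn xna]]|nn] := pselect (exists n, S n /\ x n a).
    have -> : [set b | C (b, a)] = x n.
      apply/seteqP; split=> [b [m [Sm [xmb xma]]]|b xnb].
        by rewrite (xd _ _ _ xna xma).
      by exists n.
    exact: Wx.
  have -> : [set b | C (b, a)] = set0.
    by apply/seteqP; split=> [b [m [Sm [xmb xma]]]|b []]; apply: nn; exists m.
  by [].
- move=> S S' _ _ eSS; apply/funext => n.
  have [b xnb] := x0 n.
  have key : forall T : nat -> bool,
      [set b | exists n, T n /\ x n b] b <-> T n.
    move=> T; split=> [[m [Tm xmb]]|Tn]; last by exists n.
    by rewrite (xd _ _ _ xnb xmb).
  apply/idP/idP => H.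
    by apply/(key S'); rewrite -eSS; apply/(key S).
  by apply/(key S); rewrite eSS; apply/(key S').
Qed.

Lemma chain (P : set A -> Prop) :
  (forall u, P u -> exists u' z, P u' /\ W z /\ z !=set0 /\ z `<=` u /\
                               u' `<=` u /\ z `&` u' = set0) ->
  forall u0, P u0 -> False.
Proof.
move=> step u0 Pu0.
have Hex : forall u, exists p : set A * set A,
  P u -> P p.1 /\ W p.2 /\ p.2 !=set0 /\ p.2 `<=` u /\ p.1 `<=` u /\
         p.2 `&` p.1 = set0.
  move=> u; have [Pu|nPu] := pselect (P u).
    by have [u' [z H]] := step u Pu; exists (u', z).
  by exists (set0, set0).
have [g Hg] := choice Hex.
pose u n := iter n (fun v => (g v).1) u0.
have Pu : forall n, P (u n).
  by elim=> [//|n IH]; rewrite /u iterS; case: (Hg _ IH).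
have desc : forall k n, u (k + n) `<=` u n.
  elim=> [n b //|k IH n]; change (u (k + n).+1 `<=` u n); rewrite /u iterS -/(u _).
  have [_ [_ [_ [_ [H _]]]]] := Hg _ (Pu (k + n)).
  by apply: subset_trans H _; apply: IH.
apply: (@FD (fun n => (g (u n)).2)).
- by move=> n; have [_ [H _]] := Hg _ (Pu n).
- by move=> n; have [_ [_ [H _]]] := Hg _ (Pu n).
suff H : forall n m b, (n < m)%N -> (g (u n)).2 b -> (g (u m)).2 b -> False.
  move=> n m b Hn Hm; case: (ltngtP n m) => // nm.
  + by case: (H _ _ _ nm Hn Hm).
  + by case: (H _ _ _ nm Hm Hn).
move=> n m b nm Hn Hm.
have [_ [_ [_ [zsub [_ zdis]]]]] := Hg _ (Pu n).
have [_ [_ [_ [zsub' _]]]] := Hg _ (Pu m).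
have : u (m - n.+1 + n.+1) b.
  rewrite subnK //; exact: zsub'.
move=> /desc; rewrite /u iterS => ub.
have : ((g (u n)).2 `&` (g (u n)).1) b by [].
by rewrite zdis.
Qed.

Lemma si_exists v : W v -> v !=set0 ->
  exists e, strongly_indecomposable W e /\ e `<=` v.
Proof.
move=> Wv v0; apply: contrapT => ne.
apply: (@chain (fun u => W u /\ u !=set0 /\
   ~ exists e, strongly_indecomposable W e /\ e `<=` u) _ v (conj Wv (conj v0 ne))).
move=> u [Wu [u0 nu]].
have : ~ strongly_indecomposable W u by move=> su; apply: nu; exists u; split.
move=> nsu.
have [[y [z [Wy [Wz [y0 [z0 [yz [yu zu]]]]]]]]|nn] :=
  pselect (exists y z, W y /\ W z /\ y !=set0 /\ z !=set0 /\ y `&` z = set0 /\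
                 y `<` u /\ z `<` u); last by case: nsu.
exists y, z; split; [split; [by []|split; [by []|]]|].
  move=> [e [se ey]]; apply: nu; exists e; split => //.
  exact: subset_trans ey (properW yu).
split=> //; split=> //; split; first exact: properW.
split; first exact: properW.
by rewrite setIC.
Qed.

Lemma part1 a : exists E, si_class W E /\ dominates W a E.
Proof.
apply: contrapT => nE.
case: HP => W0 [WT _].
apply: (@chain (fun u => W u /\ u a) _ setT (conj WT I)).
move=> u [Wu ua].
have [e [se eu]] := si_exists Wu (ex_intro _ a ua).
pose E := [set y | strongly_indecomposable W y /\ y `&` e !=set0].
have nd : ~ dominates W a E by move=> d; apply: nE; exists E; split => //; exists e.
have [w [Ww [wa nw]]] : exists w, W w /\ w a /\ ~ exists e', E e' /\ e' `<=` w.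
  apply: contrapT => H; apply: nd => w Ww wa.
  apply: contrapT => ne; apply: H; exists w; split=> //.
exists (u `&` w), e; split; first by split; [exact: W_meet|].
have [_ [e0 _]] := se.
split; first by case: se.
split=> //; split=> //; split; first by move=> b [].
apply/seteqP; split=> [b [eb [ub wb]]|b []].
have Wew : W (e `&` w) by apply: W_meet => //; case: se.
have [e' [se' e'sub]] := si_exists Wew (ex_intro _ b (conj eb wb)).
apply: nw; exists e'; split.
  split=> //; have [_ [[c e'c] _]] := se'.
  by exists c; split=> //; case: (e'sub c e'c).
by move=> c /e'sub [].
Qed.


Lemma si_trans x y z : strongly_indecomposable W x ->
  strongly_indecomposable W y -> strongly_indecomposable W z ->
  x `&` y !=set0 -> y `&` z !=set0 -> x `&` z !=set0.
Proof.
move=> [Wx _] [Wy [_ ny]] [Wz _] [c [xc yc]] [d [yd zd]].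
apply: contrapT => nxz; apply: ny.
exists (x `&` y), (y `&` z); split; first exact: W_meet.
split; first exact: W_meet.
split; first by exists c.
split; first by exists d.
split.
  apply/seteqP; split=> [b [[xb yb] [_ zb]]|b []].
  by apply: nxz; exists b.
split; split.
- by move=> b [].
- by move=> H; have [xd _] := H d yd; apply: nxz; exists d.
- by move=> b [].
- by move=> H; have [_ zc] := H c yc; apply: nxz; exists c.
Qed.

Lemma si_self x : strongly_indecomposable W x -> x `&` x !=set0.
Proof. by move=> [_ [[c xc] _]]; exists c. Qed.

Hypothesis HT : pratt_T1 W.

Lemma p2_cap (a : A) (E : set (set A)) : dominates W a E -> bigcap_fam E `<=` [set a].
Proof.
move=> d b bE; apply: contrapT => ba.
have [w [Ww [wa nwb]]] := HT (fun e => ba (esym e)).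
have [e [Ee ew]] := d w Ww wa.
by apply: nwb; apply: ew; apply: bE.
Qed.

Lemma p2_1 (a : A) (E : set (set A)) : dominates W a E ->
  bigcap_fam E = set0 \/ bigcap_fam E = [set a].
Proof.
move=> d; have sub := p2_cap d.
have [Ea|nEa] := pselect (bigcap_fam E a).
  by right; apply/seteqP; split=> // b ->.
left; apply/seteqP; split=> [b bE|b []].
by apply: nEa; have := sub b bE => /= <-.
Qed.

Lemma p2_Ea (a : A) (E : set (set A)) : bigcap_fam E = [set a] -> forall e, E e -> e a.
Proof. move=> hE e Ee; have : bigcap_fam E a by rewrite hE. exact. Qed.

Lemma p2_2 (a : A) (E : set (set A)) : si_class W E -> bigcap_fam E = [set a] ->
  E = [set w | strongly_indecomposable W w /\ w a].
Proof.
move=> [x [sx eE]] hE; have Ea := p2_Ea hE.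
have xa : x a by apply: Ea; rewrite eE; split => //; exact: si_self.
rewrite eE; apply/seteqP; split=> [y [sy yx]|y [sy ya]].
  split=> //; apply: Ea; rewrite eE; by split.
by split=> //; exists a.
Qed.

Lemma p2_4 (a : A) (E : set (set A)) : bigcap_fam E = [set a] ->
  forall a', dominates W a' E -> a' = a.
Proof.
move=> hE a' d; apply: contrapT => na.
have [w [Ww [wa nwa]]] := HT na.
have [e [Ee ew]] := d w Ww wa.
by apply: nwa; apply: ew; apply: (p2_Ea hE).
Qed.

Lemma p2_3 (a : A) (E : set (set A)) : si_class W E -> bigcap_fam E = [set a] ->
  forall E', si_class W E' -> dominates W a E' -> E' = E.
Proof.
move=> [x [sx eE]] hE E' [x' [sx' eE']] d'.
have Ea := p2_Ea hE.
have xa : x a by apply: Ea; rewrite eE; split => //; exact: si_self.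
have [e' [E'e' e'x]] := d' x (proj1 sx) xa.
rewrite eE' in E'e'; have [se' e'x'] := E'e'.
have e'a : e' a.
  apply: Ea; rewrite eE; split=> //.
  by have [_ [[c e'c] _]] := se'; exists c; split=> //; apply: e'x.
rewrite eE' eE; apply/seteqP; split=> [y [sy yx']|y [sy yx]].
  split=> //; apply: (si_trans sy se' sx).
    by apply: (si_trans sy sx' se') => //; rewrite setIC.
  by exists a.
split=> //; apply: (si_trans sy se' sx') => //.
by exists a; split=> //; apply: Ea; rewrite eE.
Qed.

End Helpers.
Local Open Scope card_scope.

Theorem lemma8p4 (A : Type) (W : set (set A)) :
  pratt_comonoid W -> card_lt_continuum W ->
  (forall a : A, exists E, si_class W E /\ dominates W a E) /\
  (pratt_T1 W -> forall (a : A) (E : set (set A)),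
     si_class W E -> dominates W a E ->
     (bigcap_fam E = set0 \/ bigcap_fam E = [set a]) /\
     (bigcap_fam E = [set a] ->
        E = [set w | strongly_indecomposable W w /\ w a] /\
        (forall E', si_class W E' -> dominates W a E' -> E' = E) /\
        (forall a', dominates W a' E -> a' = a))) /\
  (pratt_T1 W -> infinite_set [set: A] ->
     exists E, si_class W E /\ bigcap_fam E = set0).
Proof.
move=> HP HC; split; first exact: part1.
split.
  move=> HT a E sE d; split; first exact: p2_1 d.
  move=> hE; split; first exact: p2_2.
  split; first exact: p2_3 sE hE.
  exact: p2_4 hE.
move=> HT /infiniteP /card_leP [f].
pose an n := val (f (exist _ n (in_setT n))).
have an_inj : injective an.
  move=> n m /= /val_inj /(@inj _ _ _ f) H.
  by have := H (in_setT _) (in_setT _); case.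
apply: contrapT => nE.
have [g Hg] := choice (fun n => part1 HP HC (an n)).
have hE : forall n, bigcap_fam (g n) = [set an n].
  move=> n; have [sg dg] := Hg n.
  case: (p2_1 HT dg) => // h0; case: nE; exists (g n); by split.
have [xs Hx] := choice (fun n => proj1 (Hg n)).
apply: (FD HP HC (x := xs)).
- by move=> n; have [[]] := Hx n.
- by move=> n; have [[_ []]] := Hx n.
move=> n m b xnb xmb; apply: an_inj.
apply: (p2_4 HT (hE m)) => w Ww wa.
have [e [ge ew]] := (proj2 (Hg n)) w Ww wa.
exists e; split=> //.
have [sxm eqm] := Hx m; have [sxn eqn] := Hx n.
have ea : e (an n) by apply: (p2_Ea (hE n)).
have xma : xs m (an n).
  apply: (p2_Ea (hE n)); rewrite eqn; split=> //.
  by exists b.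
rewrite eqm; split; last by exists (an n).
by move: ge; rewrite eqn => -[].
Qed.
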